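(* Let $(\mathscr N,K)$ be a power law kinetic system with a decomposition $\mathscr D:\mathscr N=\mathscr N_1\cup\cdots\cup\mathscr N_k$ such that each subsystem $(\mathscr N_i,K_i)$ is a weakly reversible, complex balanced PL-RDK system of CLP type with $P_{Z,i}=\widetilde S_i$. If $\mathscr D$ is incidence independent and the induced covering $\widetilde{\mathscr D}$ is independent, then $(\mathscr N,K)$ is a weakly reversible CLP system with $P_Z=\sum_{i=1}^k\widetilde S_i$.
   Context: A CRN $\mathscr N=(\mathscr S,\mathscr C,\mathscr R)$ has species $\mathscr S$, complexes $\mathscr C$ (vectors in $\mathbb Z_{\ge0}^{\mathscr S}$) and reactions $\mathscr R$; it is weakly reversible if every connected component of its reaction graph is strongly connected. A decomposition is given by a partition $\{\mathscr R_1,\dots,\mathscr R_k\}$ of $\mathscr R$, $\mathscr N_i$ having reactions $\mathscr R_i$ and complexes $\mathscr C_i$ those occurring in $\mathscr R_i$; $K_i$ is the restriction of the kinetics $K$ to $\mathscr R_i$. A power law kinetics assigns to reaction $R_j$ the rate $K_j(x)=k_jx^{F_{j,\cdot}}=k_j\prod_{s}x_s^{F_{js}}$ with $k_j>0$ and real kinetic order matrix $F$ (rows indexed by reactions). It is PL-RDK (reactant-determined) if any two reactions with the same reactant complex have identical rows of $F$; then each reactant complex $y$ has a kinetic complex $\widetilde y$ (the common row). The incidence map $I_a:\mathbb R^{\mathscr R}\to\mathbb R^{\mathscr C}$ sends $y\to y'$ to $\omega_{y'}-\omega_y$; $Z_+(\mathscr N,K)=\{x\in\mathbb R^{\mathscr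 S}_{>0}: I_aK(x)=0\}$ is the set of complex balanced equilibria, and the system is complex balanced if this set is nonempty. A system is of CLP type with subspace $P_Z\subseteq\mathbb R^{\mathscr S}$ if $Z_+\neq\varnothing$ and $Z_+=\{x\in\mathbb R^{\mathscr S}_{>0}:\log x-\log x^*\in P_Z^{\perp}\}$ for some (any) $x^*\in Z_+$. For a weakly reversible PL-RDK subsystem $(\mathscr N_i,K_i)$, its network of kinetic complexes $\widetilde{\mathscr N}_i$ has reactions $\widetilde y\to\widetilde{y'}$ for each $y\to y'\in\mathscr R_i$, and its kinetic order subspace is $\widetilde S_i=\operatorname{span}\{\widetilde{y'}-\widetilde y: y\to y'\in\mathscr R_i\}$. The induced covering $\widetilde{\mathscr D}$ is $\widetilde{\mathscr N}_{\mathscr D}=\widetilde{\mathscr N}_1\cup\cdots\cup\widetilde{\mathscr N}_k$; it is independent if the stoichiometric subspace of $\widetilde{\mathscr N}_{\mathscr D}$ (which is $\sum_i\widetilde S_i$) is the direct sum of the $\widetilde S_i$. $\mathscr D$ is incidence independent if $\operatorname{Im}I_a$ is the direct sum of the images of the incidence maps of the $\mathscr N_i$. *)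

(* Defs.v *)
From HB Require Import structures.
From mathcomp Require Import all_boot all_order all_algebra.
From mathcomp Require Import all_classical all_reals exp.
Set Implicit Arguments. Unset Strict Implicit. Unset Printing Implicit Defensive.
Import Order.TTheory GRing.Theory Num.Theory.
Local Open Scope ring_scope.

(* A chemical reaction network with species 'I_n, reactions 'I_r and
   complexes 'I_c.  Complex i is the vector [cplx i] in Z_{>=0}^S; reaction j
   is  src j -> tgt j. *)
Record CRN (n r c : nat) := {
  cplx : 'I_c -> {ffun 'I_n -> nat};
  src : 'I_r -> 'I_c;
  tgt : 'I_r -> 'I_c;
  cplx_inj : injective cplx;
  no_loop : forall j, src j != tgt j;
  rxn_inj : forall j1 j2, src j1 = src j2 -> tgt j1 = tgt j2 -> j1 = j2;
  cplx_occurs : forall y, exists j, (src j == y) || (tgt j == y)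
}.

Section CRNDefs.
Variables (R : realType) (n r c : nat) (N : CRN n r c).

(* A subnetwork is given by a set P of reactions; its complexes are those
   occurring in its reactions.  P = predT gives N itself. *)

Definition redge (P : pred 'I_r) : rel 'I_c :=
  fun y1 y2 => [exists j, [&& P j, src N j == y1 & tgt N j == y2]].
Definition uedge (P : pred 'I_r) : rel 'I_c :=
  fun y1 y2 => redge P y1 y2 || redge P y2 y1.

(* weakly reversible: each connected component of the reaction graph is
   strongly connected.  (Complexes not occurring in P are isolated vertices,
   which are trivially strongly connected components.) *)
Definition weakly_reversible (P : pred 'I_r) : Prop :=
  forall y1 y2, connect (uedge P) y1 y2 -> connect (redge P) y1 y2.

Definition PLK (k : 'I_r -> R) (F : 'M[R]_(r, n)) (j : 'I_r) (x : 'I_n -> R) : R :=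
  k j * \prod_(s < n) (x s) `^ (F j s).

Definition PL_RDK (F : 'M[R]_(r, n)) (P : pred 'I_r) : Prop :=
  forall j1 j2, P j1 -> P j2 -> src N j1 = src N j2 -> row j1 F = row j2 F.

(* incidence map of the subnetwork P (as a matrix whose rows are the images
   I_a(e_j) = omega_{tgt j} - omega_{src j} for j in P, zero otherwise);
   its row space is Im I_a of the subnetwork, inside R^C *)
Definition incidence_mx (P : pred 'I_r) : 'M[R]_(r, c) :=
  \matrix_(j, y) (if P j then (tgt N j == y)%:R - (src N j == y)%:R else 0).

Definition IaK (k : 'I_r -> R) (F : 'M[R]_(r, n)) (P : pred 'I_r)
    (x : 'I_n -> R) (y : 'I_c) : R :=
  \sum_(j | P j) PLK k F j x * ((tgt N j == y)%:R - (src N j == y)%:R).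

Definition Zplus (k : 'I_r -> R) (F : 'M[R]_(r, n)) (P : pred 'I_r)
    (x : 'I_n -> R) : Prop :=
  (forall s, 0 < x s) /\ (forall y, IaK k F P x y = 0).

Definition complex_balanced k F P : Prop := exists x, Zplus k F P x.

Definition in_orth m (v : 'rV[R]_n) (A : 'M[R]_(m, n)) : bool := v *m A^T == 0.

(* CLP type with subspace P_Z = row space of A *)
Definition CLP m k F P (A : 'M[R]_(m, n)) : Prop :=
  exists xs, Zplus k F P xs /\
    forall x, Zplus k F P x <->
      ((forall s, 0 < x s) /\
       in_orth (\row_s (ln (x s) - ln (xs s))) A).

(* kinetic complex of a reactant complex y of the PL-RDK subnetwork P: the
   common kinetic-order row of the reactions of P with reactant y *)
Definition kin_cplx (F : 'M[R]_(r, n)) (P : pred 'I_r) (y : 'I_c) : 'rV[R]_n :=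
  if [pick j | P j && (src N j == y)] is Some j then row j F else 0.

(* kinetic order subspace S~_P = span{ y~' - y~ : y -> y' in P } (row space) *)
Definition kin_order_mx (F : 'M[R]_(r, n)) (P : pred 'I_r) : 'M[R]_(r, n) :=
  \matrix_j (if P j then kin_cplx F P (tgt N j) - kin_cplx F P (src N j) else 0).

End CRNDefs.

Definition block (r m : nat) (p : 'I_r -> 'I_m) (i : 'I_m) : pred 'I_r :=
  fun j => p j == i.

(* Main.v *)
Require Import Defs.
From HB Require Import structures.
From mathcomp Require Import all_boot all_order all_algebra.
From mathcomp Require Import all_classical all_reals exp.
Import Order.TTheory GRing.Theory Num.Theory.
Local Open Scope ring_scope.

Lemma dsum0 (K : fieldType) (m n : nat) (B : 'I_m -> 'M[K]_n) (v : 'I_m -> 'rV[K]_n) :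
  mxdirect (\sum_(i < m) B i)%MS -> (forall i, v i <= B i)%MS ->
  \sum_(i < m) v i = 0 -> forall i, v i = 0.
Proof.
move=> /mxdirect_sumsP dB sB s0 i.
have : (v i <= B i :&: \sum_(j | true && (j != i)) B j)%MS.
  rewrite sub_capmx sB /=.
  have -> : v i = - \sum_(j | j != i) v j.
    apply/eqP; rewrite -addr_eq0; apply/eqP.
    by move: s0; rewrite (bigD1 i).
  rewrite -scaleN1r; apply: scalemx_sub; apply: summx_sub => j ji.
  by apply: (sumsmx_sup j) => //.
by rewrite dB // submx0 => /eqP.
Qed.

Lemma orthE (K : fieldType) (a n : nat) (M : 'M[K]_(a, n)) (v : 'rV[K]_n) :
  (v *m M^T == 0) = (M <= kermx v^T)%MS.
Proof.
apply/eqP/sub_kermxP => H.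
  by rewrite -[M *m _]trmxK trmx_mul trmxK H trmx0.
by rewrite -[v *m _]trmxK trmx_mul trmxK H trmx0.
Qed.

Lemma orth_sum (K : fieldType) (m a n : nat) (A : 'I_m -> 'M[K]_(a, n)) (v : 'rV[K]_n) :
  (v *m (\sum_(i < m) <<A i>>)%MS^T == 0) = [forall i, v *m (A i)^T == 0].
Proof.
rewrite orthE; apply/sumsmx_subP/forallP => H i.
  by rewrite orthE -(genmxE (A i)); apply: H.
by move=> _; rewrite genmxE -orthE; apply: H.
Qed.

Theorem theorem10 (R : realType) (n r c : nat) (N : CRN n r c)
    (k : 'I_r -> R) (F : 'M[R]_(r, n)) (kpos : forall j, 0 < k j)
    (m : nat) (p : 'I_r -> 'I_m) (psurj : forall i, exists j, p j = i)
    (Hsub : forall i : 'I_m,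
       [/\ weakly_reversible N (block p i),
           complex_balanced N k F (block p i),
           PL_RDK N F (block p i) &
           CLP N k F (block p i) (kin_order_mx N F (block p i))])
    (Hinc : mxdirect (\sum_(i < m) <<incidence_mx R N (block p i)>>)%MS)
    (Hcov : mxdirect (\sum_(i < m) <<kin_order_mx N F (block p i)>>)%MS) :
  weakly_reversible N predT /\
  CLP N k F predT (\sum_(i < m) <<kin_order_mx N F (block p i)>>)%MS.
Proof.
split.
  move=> y1 y2; apply: connect_sub => a b /orP [] H.
    exact: connect1.
  case/existsP: H => j /and3P [_ hs ht].
  have [WR _ _ _] := Hsub (p j).
  have : connect (redge N (block p (p j))) a b.
    apply: WR; apply: connect1; apply/orP; right; apply/existsP; exists j.
    by rewrite /block eqxx hs ht.
  apply: connect_sub => x y /existsP [j' /and3P [_ h1 h2]]; apply: connect1.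
  by apply/existsP; exists j'; rewrite h1 h2.
set A := fun i => kin_order_mx N F (block p i).
have : forall i, exists xs, Zplus N k F (block p i) xs /\
    forall x, Zplus N k F (block p i) x <->
      ((forall s, 0 < x s) /\
       in_orth (\row_s (ln (x s) - ln (xs s))) (A i)).
  by move=> i; case: (Hsub i).
case/choice => xsf Hx.
pose w i : 'rV[R]_n := \row_s ln (xsf i s).
have Hcap := mxdirect_sumsP Hcov.
pose Q i := proj_mx (<<A i>>)%MS (\sum_(j | true && (j != i)) <<A j>>)%MS.
have KeyQ : forall i j, A j *m Q i = if i == j then A j else 0.
  move=> i j; case: eqP => [<-|/eqP ij].
    by apply: proj_mx_id; [exact: Hcap | rewrite genmxE].
  apply: proj_mx_0; first exact: Hcap.
  by apply: (sumsmx_sup j); [rewrite eq_sym | rewrite genmxE].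
pose u := \sum_i w i *m (Q i)^T.
have Hu : forall j, u *m (A j)^T = w j *m (A j)^T.
  move=> j; rewrite mulmx_suml (bigD1 j) //= big1 ?addr0.
    by rewrite -mulmxA -trmx_mul KeyQ eqxx.
  by move=> i ij; rewrite -mulmxA -trmx_mul KeyQ (negbTE ij) trmx0 mulmx0.
pose xs := fun s => sequences.expR (u 0 s).
pose L (x : 'I_n -> R) : 'rV[R]_n := \row_s ln (x s).
have Lxs : forall x, \row_s (ln (x s) - ln (xs s)) = L x - u.
  by move=> x; apply/rowP => s; rewrite !mxE /xs expRK.
have Lxi : forall x i, \row_s (ln (x s) - ln (xsf i s)) = L x - w i.
  by move=> x i; apply/rowP => s; rewrite !mxE.
have orthi : forall x i, in_orth (L x - w i) (A i) = in_orth (L x - u) (A i).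
  move=> x i; rewrite /in_orth !mulmxBl Hu.
  by [].
have Zequiv : forall x, Zplus N k F predT x <->
    (forall s, 0 < x s) /\ forall i, Zplus N k F (block p i) x.
  move=> x; split.
    move=> [pos H]; split=> // i; split=> // y.
    pose v i : 'rV[R]_c := \row_y IaK N k F (block p i) x y.
    have sv : forall i, (v i <= <<incidence_mx R N (block p i)>>)%MS.
      move=> i0; rewrite genmxE.
      have -> : v i0 = (\row_j PLK k F j x) *m incidence_mx R N (block p i0).
        apply/rowP => y0; rewrite !mxE /IaK big_mkcond /=.
        apply: eq_bigr => j _; rewrite !mxE.
        by case: (block p i0 j); rewrite ?mulr0.
      exact: submxMl.
    have s0 : \sum_i v i = 0.
      apply/rowP => y0; rewrite summxE mxE.
      transitivity (IaK N k F predT x y0); last exact: H y0.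
      rewrite /IaK (partition_big p predT) //=.
      by apply: eq_bigr => i0 _; rewrite mxE.
    have := @dsum0 _ _ _ _ v Hinc sv s0 i; move/rowP/(_ y); rewrite !mxE; exact.
  move=> [pos H]; split=> // y.
  rewrite /IaK (partition_big p predT) //=; apply: big1 => i _.
  exact: (H i).2 y.
exists xs; split.
  apply/Zequiv; split=> [s|i]; first exact: expR_gt0.
  apply/(Hx i).2; split=> [s|]; first exact: expR_gt0.
  rewrite Lxi orthi.
  have -> : L xs = u by apply/rowP => s; rewrite !mxE /xs expRK.
  by rewrite /in_orth subrr mul0mx.
move=> x; rewrite Zequiv Lxs /in_orth (@orth_sum _ _ _ _ A); split.
  move=> [pos H]; split=> //; apply/forallP => i.
  by have [_ ] := ((Hx i).2 x).1 (H i); rewrite Lxi orthi.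
move=> [pos /forallP H]; split=> // i; apply/(Hx i).2; split=> //.
by rewrite Lxi orthi; apply: H.
Qed.
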